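(* Let $0<\Delta\le1$ and $T=\frac{\lambda_1}{\Delta}\ln\frac{1}{\Delta}$. There exist constants $C_0,C_1>0$, independent of $P$ and $\Delta$, such that for all $P>0$ the quantizer $q_r$ with these parameters satisfies $$\mathbb{E}[r_{\rm loss}]\le\log_2(1+C_0P\Delta)\le C_1P\Delta.$$
   Context: $H_1,H_2$ are independent exponential random variables with means $\lambda_1\ge\lambda_2>0$ (density $e^{-x/\lambda_i}/\lambda_i$, $x>0$); $P>0$ is the total power. For $a\ge b\ge0$ with $a>0$ let $A(a,b)=\frac{2b}{\sqrt{(a+b)^2+4ab^2P}+a+b}$. Full-CSI maximum minimum rate: $r_{\max}=\log_2(1+PH_1A(H_1,H_2))$ if $H_1\ge H_2$ and $r_{\max}=\log_2(1+PH_2A(H_2,H_1))$ if $H_1<H_2$. Quantizer with parameters $\Delta>0$, $T\ge0$: $q_r(x)=\lfloor x/\Delta\rfloor\Delta$ for $x\le T\Delta$, $q_r(x)=T\Delta$ for $x>T\Delta$. Let $a_i=q_r(H_i)$; if $a_1\ge a_2$ let $(s,w)=(1,2)$, otherwise $(s,w)=(2,1)$. $\alpha_q=A(a_s,a_w)$ if $a_1,a_2>0$, else $\alpha_q=0$. Adapted rates: $r_{s,q}=\log_2(1+P\alpha_qa_s)$, $r_{w,q}=\log_2\big(1+\frac{Pa_w(1-\alpha_q)}{Pa_w\alpha_q+1}\big)$. Rate loss: $r_{\rm loss}=r_{\max}-\min\{r_{1,q},r_{2,q}\}$. *)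

(* Defs.v *)
From mathcomp Require Import all_boot all_order all_algebra.
From mathcomp Require Import all_classical all_reals all_analysis.
Set Implicit Arguments. Unset Strict Implicit. Unset Printing Implicit Defensive.
Import Order.TTheory GRing.Theory Num.Theory.
Local Open Scope classical_set_scope.
Local Open Scope ring_scope.

Section Defs.
Variable R : realType.

Definition log2 (x : R) : R := ln x / ln 2.

Definition Afun (P a b : R) : R :=
  2 * b / (Num.sqrt ((a + b) ^+ 2 + 4 * a * b ^+ 2 * P) + a + b).

(* full-CSI maximum minimum rate *)
Definition rmax (P h1 h2 : R) : R :=
  if h2 <= h1 then log2 (1 + P * h1 * Afun P h1 h2)
  else log2 (1 + P * h2 * Afun P h2 h1).

Definition qr (Delta T x : R) : R :=
  if x <= T * Delta then (Num.floor (x / Delta))%:~R * Delta else T * Delta.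

Definition rq_min (P Delta T h1 h2 : R) : R :=
  let a1 := qr Delta T h1 in
  let a2 := qr Delta T h2 in
  let as_ := if a2 <= a1 then a1 else a2 in
  let aw := if a2 <= a1 then a2 else a1 in
  let alpha := if (0 < a1) && (0 < a2) then Afun P as_ aw else 0 in
  let rs := log2 (1 + P * alpha * as_) in
  let rw := log2 (1 + P * aw * (1 - alpha) / (P * aw * alpha + 1)) in
  Num.min rs rw.

Definition rloss (P Delta T h1 h2 : R) : R :=
  rmax P h1 h2 - rq_min P Delta T h1 h2.

Definition expdens (l x : R) : R := expR (- x / l) / l.

(* expectation of f(H1,H2) for independent exponential H1, H2 with means
   l1, l2: integral against the product density on (0,+oo)^2 *)
Definition Eexp2 (l1 l2 : R) (f : R -> R -> R) : \bar R :=
  (\int[lebesgue_measure]_(x in `]0%R, +oo[)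
     \int[lebesgue_measure]_(y in `]0%R, +oo[)
        (f x y * expdens l1 x * expdens l2 y)%:E)%E.

End Defs.

(* Main.v *)
Require Import Defs.
From mathcomp Require Import all_boot all_order all_algebra.
From mathcomp Require Import all_classical all_reals all_analysis.
From mathcomp Require Import measurable_realfun.
From mathcomp Require Import ring lra.
Import Order.TTheory GRing.Theory Num.Theory.
Import numFieldTopology.Exports.
Local Open Scope ring_scope.

Section Integrals.
Local Open Scope classical_set_scope.
Local Open Scope ring_scope.
Variable R : realType.
Local Notation mu := (@lebesgue_measure R).

Lemma pt0 : (point : \bar R) = 0%E. Proof. by []. Qed.

Lemma int_mono (D : set R) (f g : R -> \bar R) :
  (forall x, D x -> (0 <= g x)%E) -> (forall x, D x -> (f x <= g x)%E) ->
  (\int[mu]_(x in D) f x <= \int[mu]_(x in D) g x)%E.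
Proof.
move=> g0 fg.
rewrite integralE.
apply: (@le_trans _ _ (\int[lebesgue_measure]_(x in D) f^\+ x)%E).
  rewrite -[X in (_ <= X)%E]adde0; apply: leeD => //.
  by rewrite oppe_le0; apply: integral_ge0 => x _; exact: funeneg_ge0.
rewrite [X in (X <= _)%E]integral_mkcond [X in (_ <= X)%E]integral_mkcond.
rewrite !ge0_integralTE; last first.
- by move=> x; rewrite /patch; case: ifP => // /set_mem Dx; rewrite ?funeposE ?le_max ?lexx ?orbT ?g0.
- by move=> x; rewrite /patch; case: ifP => // /set_mem Dx; rewrite ?funeposE ?le_max ?lexx ?orbT ?g0.
apply: ereal_sup_le => _ [h /= hf <-]; exists h => //= x.
apply: (le_trans (hf x)); rewrite /patch; case: ifP => // /set_mem Dx.
by rewrite funeposE ge_max g0 // fg.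
Qed.

Lemma m_expdens (D : set R) l : measurable_fun D (EFin \o expdens l).
Proof.
apply/measurable_EFinP; rewrite /expdens.
apply: measurable_funM => //.
apply: measurableT_comp => //.
exact: measurable_funM.
Qed.

Lemma m_tail (D : set R) l c :
  measurable_fun D (EFin \o (fun x => Num.max (x - c) 0 * expdens l x)).
Proof.
apply/measurable_EFinP; rewrite /expdens.
apply: measurable_funM => //.
  apply: measurable_maxr => //.
  apply: measurable_funD => //.
apply: measurable_funM => //.
apply: measurableT_comp => //.
exact: measurable_funM.
Qed.

Lemma itail (r c : R) : 0 < r -> 0 <= c ->
  (\int[mu]_(x in `[c, +oo[) (exponential_pdf r x)%:E = (expR (- r * c))%:E)%E.
Proof.
move=> r0 c0.
have cexpNM : continuous (fun z : R^o => expR (- r * z)).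
  move=> z; apply: continuous_comp; last exact: continuous_expR.
  by apply: continuousM => //; apply: (@continuousN _ R^o); exact: cst_continuous.
rewrite (@ge0_continuous_FTC2y _ _ (fun x => - (expR (- r * x))) _ 0)//.
- by rewrite EFinN sub0e oppeK.
- by move=> x _; apply: exponential_pdf_ge0; exact: ltW.
- apply: (@continuous_subspaceW R^o _ _ [set` `[0, +oo[%R]).
    by move=> x /=; rewrite !in_itv /= !andbT; apply: le_trans.
  exact: within_continuous_exponential_pdf.
- rewrite -oppr0; apply: cvgN.
  rewrite (_ : (fun x => expR (- r * x)) =
               (fun z => expR (- z)) \o (fun z => r * z)); last first.
    by apply: eq_fun => x; rewrite mulNr.
  apply: (@cvg_comp _ _ _ _ _ _ (pinfty_nbhs R)); last exact: cvgr_expR.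
  exact: gt0_cvgMry.
- by apply: cvgN; apply/cvg_at_right_filter; exact: cexpNM.
- move=> z; rewrite in_itv /= andbT => cz.
  apply: derive1_exponential_pdf; rewrite in_itv /= andbT.
  exact: le_lt_trans cz.
Qed.

Lemma I0 (l : R) : 0 < l ->
  (\int[mu]_(x in `]0%R, +oo[) (expdens l x)%:E <= 1)%E.
Proof.
move=> l0.
rewrite integral_mkcond.
rewrite -(@integral_exponential_pdf R l^-1); last by rewrite invr_gt0.
apply: (@int_mono setT) => x _.
  by rewrite lee_fin exponential_pdf_ge0 // invr_ge0 ltW.
rewrite /patch; case: ifP => [|_].
  rewrite inE /= in_itv /= andbT => x0.
  rewrite (exponential_pdfE _ (ltW x0)) /= /expdens lee_fin.
  have -> : - l^-1 * x = - x / l by rewrite !mulNr mulrC.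
  by rewrite mulrC.
by rewrite pt0 lee_fin exponential_pdf_ge0 // invr_ge0 ltW.
Qed.

Lemma pw_tail (l c x : R) : 0 < l -> c <= x ->
  (x - c) * (expR (- x / l) / l) <=
  4 * l * expR (- c / (2 * l)) * ((2 * l)^-1 * expR (- (2 * l)^-1 * x)).
Proof.
move=> l0 cx.
have l2 : 0 < 2 * l by rewrite mulr_gt0.
set t := (x - c) / (2 * l).
have t0 : 0 <= t by rewrite /t divr_ge0 ?subr_ge0 // ltW.
have e1 : expR (- x / l) = expR (- (2 * l)^-1 * x) * expR (- (2 * l)^-1 * x).
  by rewrite -expRD; congr expR; field; rewrite gt_eqF.
have e2 : expR (- (2 * l)^-1 * x) = expR (- c / (2 * l)) * expR (- t).
  by rewrite -expRD; congr expR; rewrite /t; field; rewrite gt_eqF.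
have ht : t * expR (- t) <= 1.
  rewrite expRN -ler_pdivlMr ?invr_gt0 ?expR_gt0 // mul1r invrK.
  by apply: le_trans (expR_ge1Dx t); rewrite lerDr.
have xc : x - c = 2 * l * t by rewrite /t; field; rewrite gt_eqF.
rewrite e1 e2 xc.
set E1 := expR (- c / (2 * l)); set E2 := expR (- t).
have -> : 2 * l * t * (E1 * E2 * (E1 * E2) / l) = (2 * E1 * (E1 * E2)) * (t * E2).
  by field; rewrite gt_eqF.
have -> : 4 * l * E1 * ((2 * l)^-1 * (E1 * E2)) = 2 * E1 * (E1 * E2).
  by field; rewrite gt_eqF.
apply: ler_piMr => //.
by rewrite !mulr_ge0 ?expR_ge0.
Qed.

Lemma I1 (l c : R) : 0 < l -> 0 <= c ->
  (\int[mu]_(x in `]0%R, +oo[) (Num.max (x - c) 0 * expdens l x)%:E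
     <= (4 * l * expR (- c / l))%:E)%E.
Proof.
move=> l0 c0.
have l2 : 0 < 2 * l by rewrite mulr_gt0.
set K := 4 * l * expR (- c / (2 * l)).
have K0 : 0 <= K by rewrite /K !mulr_ge0 ?expR_ge0 // ltW.
have r0 : 0 < (2 * l)^-1 by rewrite invr_gt0.
rewrite integral_mkcond.
apply: (@le_trans _ _ (\int[lebesgue_measure]_(x in setT)
   (((fun x => (K * exponential_pdf (2 * l)^-1 x)%:E) \_ `[c, +oo[) x))%E).
  apply: (@int_mono setT) => x _.
    rewrite /patch; case: ifP => // _.
    by rewrite lee_fin mulr_ge0 // exponential_pdf_ge0 // ltW.
  rewrite /patch; case: ifP => [|_]; last first.
    case: ifP => // _.
    by rewrite lee_fin mulr_ge0 // exponential_pdf_ge0 // ltW.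
  rewrite inE /= in_itv /= andbT => x0.
  case: ifP => [|].
    rewrite inE /= in_itv /= andbT => cx.
    rewrite lee_fin exponential_pdfE; last exact: le_trans cx.
    rewrite /expdens.
    have -> : Num.max (x - c) 0 = x - c by apply/max_idPl; rewrite subr_ge0.
    exact: pw_tail.
  move=> hx; have xc : x < c.
    rewrite ltNge; apply/negP => cx; move: hx.
    suff -> : x \in `[c, +oo[%classic by [].
    by apply/mem_set; rewrite /= in_itv /= andbT.
  have -> : Num.max (x - c) 0 = 0.
    by apply/max_idPr; rewrite subr_le0 ltW.
  by rewrite mul0r pt0.
rewrite -integral_mkcond.
under eq_integral do rewrite EFinM.
rewrite ge0_integralZl_EFin //; last 2 first.
- by move=> x _; rewrite lee_fin exponential_pdf_ge0 // ltW.
- by apply/measurable_EFinP; apply: measurable_funTS; exact: measurable_exponential_pdf.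
rewrite itail // -EFinM lee_fin /K.
rewrite -[X in X <= _]mulrA -expRD.
have -> : - c / (2 * l) + - (2 * l)^-1 * c = - c / l by field; rewrite gt_eqF.
by [].
Qed.

Lemma lin_bound (l c A B : R) : 0 < l -> 0 <= c -> 0 <= A -> 0 <= B ->
  (\int[mu]_(x in `]0%R, +oo[)
      (A * expdens l x + B * (Num.max (x - c) 0 * expdens l x))%:E
     <= (A + B * (4 * l * expR (- c / l)))%:E)%E.
Proof.
move=> l0 c0 A0 B0.
have ed0 x : 0 <= expdens l x by rewrite /expdens divr_ge0 ?expR_ge0 // ltW.
have tl0 x : 0 <= Num.max (x - c) 0 * expdens l x.
  by rewrite mulr_ge0 // le_max lexx orbT.
under eq_integral do rewrite EFinD.
rewrite ge0_integralD //; last 4 first.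
- by move=> x _; rewrite lee_fin mulr_ge0.
- apply/measurable_EFinP; apply: measurable_funM => //.
  by apply/measurable_EFinP; exact: m_expdens.
- by move=> x _; rewrite lee_fin mulr_ge0.
- apply/measurable_EFinP; apply: measurable_funM => //.
  by apply/measurable_EFinP; exact: m_tail.
have hZ (f : R -> R) (k : R) : 0 <= k -> (forall x, 0 <= f x) ->
    measurable_fun (`]0%R, +oo[ : set R) (EFin \o f) ->
    (\int[mu]_(x in `]0%R, +oo[) (k * f x)%:E =
     k%:E * \int[mu]_(x in `]0%R, +oo[) (f x)%:E)%E.
  move=> k0 f0 mf; under eq_integral do rewrite EFinM.
  by rewrite ge0_integralZl_EFin // => x _; rewrite lee_fin.
rewrite (hZ (expdens l)) //; last exact: m_expdens.
rewrite (hZ (fun x => Num.max (x - c) 0 * expdens l x)) //; last exact: m_tail.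
rewrite EFinD; apply: leeD.
  rewrite -[X in (_ <= X)%E]mule1.
  by apply: lee_wpmul2l; rewrite ?lee_fin //; exact: I0.
rewrite EFinM.
by apply: lee_wpmul2l; rewrite ?lee_fin //; exact: I1.
Qed.

End Integrals.

Section Alg.
Local Open Scope ring_scope.
Variable R : realType.

Lemma ident {P a b : R} : 0 <= P -> 0 <= a -> 0 <= b ->
  (P * a * Afun P a b) ^+ 2 * b + (P * a * Afun P a b) * (a + b) = P * a * b.
Proof.
move=> P0 a0 b0.
have [ab0|abpos] : a + b = 0 \/ 0 < a + b.
  by case: (ltrP 0 (a + b)) => h; [right|left; lra].
  have a00 : a = 0 by lra.
  have b00 : b = 0 by lra.
  by rewrite a00 b00; ring.
rewrite /Afun.
set D := (a + b) ^+ 2 + 4 * a * b ^+ 2 * P.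
have D0 : 0 <= D by rewrite /D addr_ge0 ?sqr_ge0 // !mulr_ge0.
set q := Num.sqrt D.
have q0 : 0 <= q := sqrtr_ge0 D.
have hq : q ^+ 2 = D by rewrite sqr_sqrtr.
set t := q + a + b.
have t0 : t != 0 by rewrite /t; apply/lt0r_neq0; lra.
set s := P * a * (2 * b / t).
have st : s * t = 2 * P * a * b by rewrite /s; field.
have E : (s ^+ 2 * b + s * (a + b) - P * a * b) * t ^+ 2
   = b * (s * t) ^+ 2 + (a + b) * t * (s * t) - P * a * b * t ^+ 2 by ring.
rewrite st in E.
have E2 : b * (2 * P * a * b) ^+ 2 + (a + b) * t * (2 * P * a * b) - P * a * b * t ^+ 2
   = P * a * b * (D - q ^+ 2) by rewrite /t /D; ring.
rewrite E2 hq subrr mulr0 in E.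
move/eqP: E; rewrite mulf_eq0 expf_eq0 /= (negbTE t0) orbF subr_eq0.
by move/eqP.
Qed.

Lemma Afun_ge0 (P a b : R) : 0 <= P -> 0 <= a -> 0 <= b -> 0 <= Afun P a b.
Proof.
move=> P0 a0 b0; rewrite /Afun divr_ge0 //; first by rewrite mulr_ge0.
by rewrite !addr_ge0 // sqrtr_ge0.
Qed.

Arguments Afun_ge0 {P a b}.

Lemma log2_1 : log2 (1 : R) = 0.
Proof. by rewrite /log2 ln1 mul0r. Qed.

Lemma log2_ge0 (x : R) : 1 <= x -> 0 <= log2 x.
Proof.
move=> x1; rewrite /log2 divr_ge0 //.
  by rewrite -ln1 ler_ln ?posrE //; lra.
by rewrite -ln1 ler_ln ?posrE //; lra.
Qed.

Lemma rq_gen (P as_ aw : R) (pos : bool) : 0 < P -> 0 <= as_ -> 0 <= aw ->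
  (pos -> 0 < as_ /\ 0 < aw) ->
  let alpha := if pos then Afun P as_ aw else 0 in
  Num.min (log2 (1 + P * alpha * as_))
          (log2 (1 + P * aw * (1 - alpha) / (P * aw * alpha + 1)))
  = log2 (1 + P * as_ * alpha).
Proof.
move=> P0 as0 aw0; case: pos => hpos /=; last first.
  rewrite !mulr0 mul0r addr0 log2_1 subr0 mulr1 add0r divr1.
  by apply/min_idPl; apply: log2_ge0; rewrite lerDl mulr_ge0 // ltW.
have [as1 aw1] := hpos isT.
set al := Afun P as_ aw.
have al0 : 0 <= al by apply: Afun_ge0 => //; exact: ltW.
have id := ident (ltW P0) (ltW as1) (ltW aw1); rewrite -/al in id.
have h1 : P * as_ * aw * al ^+ 2 + al * (as_ + aw) = aw.
  have Pas : P * as_ != 0 by rewrite mulf_neq0 // gt_eqF.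
  apply: (mulfI Pas); rewrite -[RHS]id; ring.
have d : P * aw * al + 1 != 0.
  by apply/lt0r_neq0; have := mulr_ge0 (mulr_ge0 (ltW P0) aw0) al0; lra.
have -> : P * aw * (1 - al) / (P * aw * al + 1) = P * al * as_.
  apply: (mulIf d); rewrite divfK //.
  have -> : P * al * as_ * (P * aw * al + 1) =
     P * (P * as_ * aw * al ^+ 2 + al * (as_ + aw)) - P * aw * al by ring.
  by rewrite h1; ring.
by rewrite minxx mulrAC.
Qed.



Lemma key (P hs hw as_ aw x y : R) : 0 <= P -> 0 < hs -> 0 < hw ->
  0 <= as_ -> as_ <= hs -> 0 <= aw -> aw <= hw -> 0 <= x -> 0 <= y ->
  x ^+ 2 * hw + x * (hs + hw) = P * hs * hw ->
  y ^+ 2 * aw + y * (as_ + aw) = P * as_ * aw ->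
  x <= y + P * ((hs - as_) + (hw - aw)).
Proof.
move=> P0 hs0 hw0 as0 ash aw0 awh x0 y0 hx hy.
set u := hs - as_; set v := hw - aw.
have u0 : 0 <= u by rewrite /u subr_ge0.
have v0 : 0 <= v by rewrite /v subr_ge0.
have ehs : hs = as_ + u by rewrite /u; ring.
have ehw : hw = aw + v by rewrite /v; ring.
set z := y + P * (u + v).
have zy : y <= z by rewrite /z lerDl mulr_ge0 // addr_ge0.
have Pz : P * (u + v) <= z by rewrite /z lerDr.
have Gz : 0 <= z ^+ 2 * hw + z * (hs + hw) - P * hs * hw.
  have h1 : y ^+ 2 * aw <= z ^+ 2 * hw.
    apply: ler_pM; rewrite ?sqr_ge0 //; first by rewrite lerXn2r ?nnegrE //; lra.
  have h2 : P * (u + v) * (u + v) <= z * (u + v) by rewrite ler_wpM2r // addr_ge0.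
  have E : z ^+ 2 * hw + z * (hs + hw) - P * hs * hw =
     (z ^+ 2 * hw - y ^+ 2 * aw) + (y ^+ 2 * aw + y * (as_ + aw) - P * as_ * aw)
     + (z - y) * (as_ + aw) + z * (u + v) - P * (as_ * v + u * aw + u * v).
    by rewrite ehs ehw; ring.
  rewrite E hy subrr addr0.
  have -> : z - y = P * (u + v) by rewrite /z; ring.
  have : 0 <= P * (u * as_ + v * aw + u ^+ 2 + u * v + v ^+ 2).
    by rewrite mulr_ge0 // !addr_ge0 ?mulr_ge0 ?sqr_ge0.
  nra.
rewrite leNgt; apply/negP => zx.
have : 0 < (x - z) * ((x + z) * hw + hs + hw).
  apply: mulr_gt0; first by rewrite subr_gt0.
  have z0 : 0 <= z by apply: le_trans y0 zy.
  have := mulr_ge0 (addr_ge0 x0 z0) (ltW hw0).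
  lra.
have -> : (x - z) * ((x + z) * hw + hs + hw) =
   (x ^+ 2 * hw + x * (hs + hw) - P * hs * hw) - (z ^+ 2 * hw + z * (hs + hw) - P * hs * hw)
   by ring.
rewrite hx subrr; lra.
Qed.


Arguments key {P hs hw as_ aw x y}.

Lemma rq_gen' (P as_ aw : R) (pos : bool) : 0 < P -> 0 <= as_ -> 0 <= aw ->
  (pos -> 0 < as_ /\ 0 < aw) ->
  Num.min (log2 (1 + P * (if pos then Afun P as_ aw else 0) * as_))
          (log2 (1 + P * aw * (1 - (if pos then Afun P as_ aw else 0)) /
                   (P * aw * (if pos then Afun P as_ aw else 0) + 1)))
  = log2 (1 + P * as_ * (if pos then Afun P as_ aw else 0)).
Proof. exact: rq_gen. Qed.

Lemma rq_val (P Delta T h1 h2 : R) : 0 < P ->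
  0 <= qr Delta T h1 -> 0 <= qr Delta T h2 ->
  exists y, 0 <= y /\ rq_min P Delta T h1 h2 = log2 (1 + y) /\
   (qr Delta T h2 <= qr Delta T h1 ->
     y ^+ 2 * qr Delta T h2 + y * (qr Delta T h1 + qr Delta T h2)
       = P * qr Delta T h1 * qr Delta T h2) /\
   (~~ (qr Delta T h2 <= qr Delta T h1) ->
     y ^+ 2 * qr Delta T h1 + y * (qr Delta T h2 + qr Delta T h1)
       = P * qr Delta T h2 * qr Delta T h1).
Proof.
move=> P0; set a1 := qr Delta T h1; set a2 := qr Delta T h2 => a10 a20.
set pos := (0 < a1) && (0 < a2).
have hp : pos -> 0 < a1 /\ 0 < a2 by move=> /andP.
have hn : ~~ pos -> a1 * a2 = 0.
  rewrite negb_and -!leNgt => /orP[h|h].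
    by rewrite (_ : a1 = 0) ?mul0r //; lra.
  by rewrite (_ : a2 = 0) ?mulr0 //; lra.
rewrite /rq_min /= -/a1 -/a2.
case: (boolP (a2 <= a1)) => h21.
  exists (P * a1 * (if pos then Afun P a1 a2 else 0)).
  split.
    apply: mulr_ge0; first exact: mulr_ge0 (ltW P0) a10.
    by case: ifP => _ //; exact: Afun_ge0 (ltW P0) a10 a20.
  split; first exact: (rq_gen' P a1 a2 pos P0 a10 a20 hp).
  split => // _.
  case: (boolP pos) => hpos.
    exact: ident (ltW P0) a10 a20.
  by rewrite -[RHS]mulrA (hn hpos); ring.
exists (P * a2 * (if pos then Afun P a2 a1 else 0)).
split.
  apply: mulr_ge0; first exact: mulr_ge0 (ltW P0) a20.
  by case: ifP => _ //; exact: Afun_ge0 (ltW P0) a20 a10.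
split.
  apply: (rq_gen' P a2 a1 pos P0 a20 a10).
  by move=> /hp [] ? ?; split.
split => // _.
case: (boolP pos) => hpos.
  exact: ident (ltW P0) a20 a10.
by rewrite -[RHS]mulrA [a2 * a1]mulrC (hn hpos) ; ring.
Qed.


Lemma qr_ge0 (Delta T x : R) : 0 < Delta -> 0 <= T -> 0 <= x -> 0 <= qr Delta T x.
Proof.
move=> D0 T0 x0; rewrite /qr; case: ifP => _; last by rewrite mulr_ge0 // ltW.
apply: mulr_ge0; last exact: ltW.
by rewrite ler0z floor_ge0 divr_ge0 // ltW.
Qed.

Lemma qr_le (Delta T x : R) : 0 < Delta -> qr Delta T x <= x.
Proof.
move=> D0; rewrite /qr; case: ifP => [_|/negbT]; last by rewrite -ltNge => /ltW.
rewrite -ler_pdivlMr //; exact: floor_le.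
Qed.

Lemma qr_err (Delta T x : R) : 0 < Delta ->
  x - qr Delta T x <= Delta + Num.max (x - T * Delta) 0.
Proof.
move=> D0; have m0 : 0 <= Num.max (x - T * Delta) 0 by rewrite le_max lexx orbT.
have m1 : x - T * Delta <= Num.max (x - T * Delta) 0 by rewrite le_max lexx.
rewrite /qr; case: ifP => [_|_]; last by lra.
have := floorD1_gt (x / Delta); rewrite intrD.
move=> h.
have ex : x = (x / Delta) * Delta by rewrite divfK ?gt_eqF.
move: h; set q := x / Delta; set F := (Num.floor q)%:~R => h.
have e1 : (1%:~R : R) = 1 by [].
rewrite e1 in h.
have : 0 < (F + 1 - q) * Delta by apply: mulr_gt0 => //; lra.
have h2 : (F + 1 - q) * Delta = F * Delta + Delta - q * Delta by ring.
have ex2 : x = q * Delta by rewrite /q divfK ?gt_eqF.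
move=> h3; rewrite h2 in h3; lra.
Qed.

Lemma qr_mono (Delta T x y : R) : 0 < Delta -> x <= y -> qr Delta T x <= qr Delta T y.
Proof.
move=> D0 xy; rewrite /qr.
case: ifP => hx; case: ifP => hy.
- by rewrite ler_pM2r // ler_int le_floor // ler_pM2r // invr_gt0.
- by apply: le_trans hx; rewrite -ler_pdivlMr //; exact: floor_le.
- by move/negbT: hx; rewrite -ltNge => hx; have := le_lt_trans hy (lt_le_trans hx xy); rewrite ltxx.
- by [].
Qed.

Lemma log_step (P x y E : R) : 0 <= P -> 0 <= x -> 0 <= y -> 0 <= E ->
  x <= y + P * E -> log2 (1 + x) - log2 (1 + y) <= log2 (1 + P * E).
Proof.
move=> P0 x0 y0 E0 h.
have PE : 0 <= P * E by rewrite mulr_ge0.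
rewrite /log2 -mulrBl ler_pM2r; last by rewrite invr_gt0; apply: ln_gt0; lra.
rewrite lerBlDr -lnM ?posrE; try lra.
rewrite ler_ln ?posrE; try nra.
Qed.

Lemma loss_gen (P hs hw as_ aw y E : R) : 0 < P -> 0 < hs -> 0 < hw ->
  0 <= as_ -> as_ <= hs -> 0 <= aw -> aw <= hw -> 0 <= y ->
  y ^+ 2 * aw + y * (as_ + aw) = P * as_ * aw ->
  (hs - as_) + (hw - aw) <= E ->
  log2 (1 + P * hs * Afun P hs hw) - log2 (1 + y) <= log2 (1 + P * E).
Proof.
move=> P0 hs0 hw0 as0 ash aw0 awh y0 hy hE.
have x0 : 0 <= P * hs * Afun P hs hw.
  apply: mulr_ge0; first by apply: mulr_ge0; apply: ltW.
  by apply: Afun_ge0; apply: ltW.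
apply: log_step => //; first exact: ltW.
  by apply: le_trans hE; rewrite addr_ge0 // subr_ge0.
apply: (le_trans (key (ltW P0) hs0 hw0 as0 ash aw0 awh x0 y0 (ident (ltW P0) (ltW hs0) (ltW hw0)) hy)).
by rewrite lerD2l ler_wpM2l // ltW.
Qed.


Arguments qr_ge0 {Delta T x}.
Arguments qr_le {Delta T x}.
Arguments qr_err {Delta T x}.
Arguments qr_mono {Delta T x y}.
Arguments rq_val {P Delta T h1 h2}.
Arguments loss_gen {P hs hw as_ aw y E}.

Lemma pw (P Delta T h1 h2 : R) : 0 < P -> 0 < Delta -> 0 <= T -> 0 < h1 -> 0 < h2 ->
  rloss P Delta T h1 h2 <= log2 (1 + P * (2 * Delta + Num.max (h1 - T * Delta) 0
                                                + Num.max (h2 - T * Delta) 0)).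
Proof.
move=> P0 D0 T0 h10 h20.
have a10 : 0 <= qr Delta T h1 := qr_ge0 D0 T0 (ltW h10).
have a20 : 0 <= qr Delta T h2 := qr_ge0 D0 T0 (ltW h20).
rewrite /rloss.
have [y [y0 [-> [hA hB]]]] := rq_val P0 a10 a20.
have e1 : h1 - qr Delta T h1 <= Delta + Num.max (h1 - T * Delta) 0 := qr_err D0.
have e2 : h2 - qr Delta T h2 <= Delta + Num.max (h2 - T * Delta) 0 := qr_err D0.
have l1 : qr Delta T h1 <= h1 := qr_le D0.
have l2 : qr Delta T h2 <= h2 := qr_le D0.
have mono12 : h2 <= h1 -> qr Delta T h2 <= qr Delta T h1 := qr_mono D0.
have mono21 : h1 <= h2 -> qr Delta T h1 <= qr Delta T h2 := qr_mono D0.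
rewrite /rmax.
move: a10 a20 hA hB e1 e2 l1 l2 mono12 mono21.
generalize (qr Delta T h1) (qr Delta T h2) => a1 a2 a10 a20 hA hB e1 e2 l1 l2 mono12 mono21.
case: (lerP h2 h1) => h21.
  apply: (loss_gen P0 h10 h20 a10 l1 a20 l2 y0 (hA (mono12 h21))).
  lra.
case: (boolP (a2 <= a1)) => a21.
  have ea : a1 = a2 by apply/le_anti; rewrite a21 mono21 // ltW.
  subst a1.
  apply: (loss_gen P0 h20 h10 a20 l2 a10 l1 y0 (hA a21)).
  lra.
apply: (loss_gen P0 h20 h10 a20 l2 a10 l1 y0 (hB a21)).
lra.
Qed.

End Alg.


Section Final.
Local Open Scope classical_set_scope.
Local Open Scope ring_scope.
Variable R : realType.
Local Notation mu := (@lebesgue_measure R).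

Lemma ln_ge_frac {u : R} : 0 <= u -> u / (1 + u) <= ln (1 + u).
Proof.
move=> u0.
have h := @le_ln1Dx R ((1 + u)^-1 - 1).
have p : 0 < (1 + u)^-1 by rewrite invr_gt0; lra.
have := h ltac:(lra); rewrite addrC subrK lnV ?posrE; last lra.
have -> : (1 + u)^-1 - 1 = - (u / (1 + u)) by field; apply: lt0r_neq0; lra.
lra.
Qed.

Lemma tangent (P Delta C0 D : R) : 0 < P -> 0 < Delta -> 0 < C0 -> 0 <= D ->
  log2 (1 + P * D) <=
  (log2 (1 + C0 * P * Delta) - P / ((1 + C0 * P * Delta) * ln 2) * C0 * Delta)
  + P / ((1 + C0 * P * Delta) * ln 2) * D.
Proof.
move=> P0 D0 C00 DD0.
set u := C0 * P * Delta.
have u0 : 0 < u by rewrite /u !mulr_gt0.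
have u0' : 0 < C0 * P * Delta := u0.
have l2 : 0 < ln (2 : R) by apply: ln_gt0; lra.
have PD : 0 <= P * D by rewrite mulr_ge0 // ltW.
set w := (1 + P * D) / (1 + u) - 1.
have w1 : -1 < w.
  have : 0 < (1 + P * D) / (1 + u) by rewrite divr_gt0 //; lra.
  rewrite /w; lra.
have h := le_ln1Dx w1.
rewrite /w addrC subrK lnM ?posrE ?invr_gt0 in h; try lra.
rewrite lnV ?posrE in h; last lra.
rewrite /log2.
have -> : P / ((1 + u) * ln 2) * C0 * Delta = (u / (1 + u)) / ln 2.
  by rewrite /u; field; apply/andP; split; apply: lt0r_neq0; lra.
have -> : P / ((1 + u) * ln 2) * D = (P * D / (1 + u)) / ln 2.
  by field; apply/andP; split; apply: lt0r_neq0; lra.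
rewrite -!mulrBl -mulrDl ler_pM2r; last by rewrite invr_gt0.
have e : (1 + P * D) / (1 + u) - 1 = P * D / (1 + u) - u / (1 + u) by field; apply: lt0r_neq0; lra.
rewrite e in h.
lra.
Qed.

Lemma L_ge0 (P Delta C0 : R) : 0 < P -> 0 < Delta -> 0 < C0 ->
  0 <= log2 (1 + C0 * P * Delta) - P / ((1 + C0 * P * Delta) * ln 2) * C0 * Delta.
Proof.
move=> P0 D0 C00.
set u := C0 * P * Delta.
have u0 : 0 < u by rewrite /u !mulr_gt0.
have u0' : 0 < C0 * P * Delta := u0.
have l2 : 0 < ln (2 : R) by apply: ln_gt0; lra.
have -> : P / ((1 + u) * ln 2) * C0 * Delta = (u / (1 + u)) / ln 2.
  by rewrite /u; field; apply/andP; split; apply: lt0r_neq0; lra.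
rewrite /log2 -mulrBl; apply: mulr_ge0; last by rewrite invr_ge0 ltW.
have := ln_ge_frac (ltW u0); rewrite /u; lra.
Qed.

Lemma exp_tail (l1 l Delta : R) : 0 < l -> l <= l1 -> 0 < Delta -> Delta <= 1 ->
  expR (- (l1 / Delta * ln (1 / Delta) * Delta) / l) <= Delta.
Proof.
move=> l0 ll1 D0 D1.
have lnD : ln Delta <= 0 by apply: ln_le0.
have e : l1 / Delta * ln (1 / Delta) * Delta = - (l1 * ln Delta).
  by rewrite div1r lnV ?posrE //; field; rewrite gt_eqF.
rewrite e opprK -[X in _ <= X](lnK (x := Delta)) ?posrE //.
rewrite ler_expR.
rewrite ler_pdivrMr //.
nra.
Qed.

End Final.

Arguments L_ge0 {R P Delta C0}.
Arguments tangent {R P Delta C0 D}.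
Arguments exp_tail {R l1 l Delta}.
Arguments pw {R P Delta T h1 h2}.
Arguments lin_bound {R l c A B}.

Theorem corollary1 (R : realType) (l1 l2 : R) (hl2 : 0 < l2) (hl12 : l2 <= l1) :
  exists C0 C1 : R, 0 < C0 /\ 0 < C1 /\
    forall Delta P : R, 0 < Delta -> Delta <= 1 -> 0 < P ->
      let T := l1 / Delta * ln (1 / Delta) in
      (Eexp2 l1 l2 (fun h1 h2 => rloss P Delta T h1 h2)
         <= (log2 (1 + C0 * P * Delta))%:E)%E /\
      log2 (1 + C0 * P * Delta) <= C1 * P * Delta.
Proof.
have hl1 : 0 < l1 by exact: lt_le_trans hl12.
have l2pos : 0 < ln (2 : R) by apply: ln_gt0; lra.
set C0 := 2 + 4 * l1 + 4 * l2.
have C00 : 0 < C0 by rewrite /C0; lra.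
exists C0, (C0 / ln 2); split => //; split; first by rewrite divr_gt0.
move=> Delta P D0 D1 P0 T.
split; last first.
  have u0 : 0 < C0 * P * Delta by rewrite !mulr_gt0.
  have -> : C0 / ln 2 * P * Delta = (C0 * P * Delta) / ln 2.
    by field; apply: lt0r_neq0.
  rewrite /log2 ler_pM2r ?invr_gt0 //.
  by apply: le_ln1Dx; lra.
set c := T * Delta.
have T0 : 0 <= T.
  rewrite /T; apply: mulr_ge0; first by apply: divr_ge0; apply: ltW.
  by rewrite div1r lnV ?posrE // oppr_ge0; apply: ln_le0.
have c0 : 0 <= c by rewrite /c mulr_ge0 // ltW.
set K := P / ((1 + C0 * P * Delta) * ln 2).
set L := log2 (1 + C0 * P * Delta) - K * C0 * Delta.
have K0 : 0 <= K by rewrite /K divr_ge0 ?mulr_ge0 ?ltW //; have := mulr_gt0 (mulr_gt0 C00 P0) D0; lra.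
have L0 : 0 <= L := L_ge0 P0 D0 C00.
have ed0 (l x : R) : 0 < l -> 0 <= expdens l x by move=> lp; rewrite /expdens divr_ge0 ?expR_ge0 // ltW.
have mx0 (x : R) : 0 <= Num.max (x - c) 0 by rewrite le_max lexx orbT.
set E1 := 4 * l1 * expR (- c / l1).
set E2 := 4 * l2 * expR (- c / l2).
have E10 : 0 <= E1 by rewrite /E1 !mulr_ge0 ?expR_ge0 // ltW.
have E20 : 0 <= E2 by rewrite /E2 !mulr_ge0 ?expR_ge0 // ltW.
have E1D : E1 <= 4 * l1 * Delta.
  rewrite /E1; apply: ler_wpM2l; first by rewrite mulr_ge0 // ltW.
  exact: exp_tail.
have E2D : E2 <= 4 * l2 * Delta.
  rewrite /E2; apply: ler_wpM2l; first by rewrite mulr_ge0 // ltW.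
  exact: exp_tail.
rewrite /Eexp2.
apply: (@le_trans _ _ (\int[lebesgue_measure]_(x in `]0%R, +oo[)
    ((L + K * (2 * Delta + E2)) * expdens l1 x
       + K * (Num.max (x - c) 0 * expdens l1 x))%:E)%E).
  apply: int_mono => x.
    rewrite /= in_itv /= andbT => x0.
    have f1 := ed0 l1 x hl1; have m1 := mx0 x.
    have a1 : 0 <= L + K * (2 * Delta + E2) by rewrite addr_ge0 // mulr_ge0 //; lra.
    rewrite lee_fin; apply: addr_ge0; first exact: mulr_ge0.
    by apply: mulr_ge0 => //; exact: mulr_ge0.
  rewrite /= in_itv /= andbT => x0.
  set A := expdens l1 x * (L + K * (2 * Delta + Num.max (x - c) 0)).
  set B := K * expdens l1 x.
  have A0 : 0 <= A by rewrite /A mulr_ge0 ?ed0 // addr_ge0 // mulr_ge0 // addr_ge0 //; lra.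
  have B0 : 0 <= B by rewrite /B mulr_ge0 ?ed0.
  apply: (@le_trans _ _ (\int[lebesgue_measure]_(y in `]0%R, +oo[)
    (A * expdens l2 y + B * (Num.max (y - c) 0 * expdens l2 y))%:E)%E).
    apply: int_mono => y.
      rewrite /= in_itv /= andbT => y0.
      by rewrite lee_fin addr_ge0 // mulr_ge0 // ?ed0 // mulr_ge0 // ?ed0.
    rewrite /= in_itv /= andbT => y0.
    rewrite lee_fin.
    have hp := pw P0 D0 T0 x0 y0; rewrite -/c in hp.
    have ht := tangent P0 D0 C00 (D := 2 * Delta + Num.max (x - c) 0 + Num.max (y - c) 0).
    rewrite -/K -/L in ht.
    have := ht ltac:(rewrite !addr_ge0 //; lra) => ht'.
    have hr := le_trans hp ht'.
    have f10 := ed0 l1 x hl1; have f20 := ed0 l2 y hl2.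
    have : rloss P Delta T x y * (expdens l1 x * expdens l2 y) <=
       (L + K * (2 * Delta + Num.max (x - c) 0 + Num.max (y - c) 0)) *
          (expdens l1 x * expdens l2 y).
      by rewrite ler_wpM2r // mulr_ge0.
    rewrite /A /B.
    have -> : expdens l1 x * (L + K * (2 * Delta + Num.max (x - c) 0)) * expdens l2 y +
       K * expdens l1 x * (Num.max (y - c) 0 * expdens l2 y) =
       (L + K * (2 * Delta + Num.max (x - c) 0 + Num.max (y - c) 0)) *
          (expdens l1 x * expdens l2 y) by ring.
    by rewrite mulrA.
  apply: le_trans (lin_bound hl2 c0 A0 B0) _.
  rewrite lee_fin -/E2 /A /B.
  have -> : expdens l1 x * (L + K * (2 * Delta + Num.max (x - c) 0)) +
     K * expdens l1 x * E2 = (L + K * (2 * Delta + E2)) * expdens l1 x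
       + K * (Num.max (x - c) 0 * expdens l1 x) by ring.
  by [].
have A'0 : 0 <= L + K * (2 * Delta + E2) by rewrite addr_ge0 // mulr_ge0 //; lra.
apply: le_trans (lin_bound hl1 c0 A'0 K0) _.
rewrite lee_fin -/E1.
have -> : log2 (1 + C0 * P * Delta) = L + K * C0 * Delta by rewrite /L; ring.
have : K * (E2 + E1) <= K * (C0 * Delta - 2 * Delta).
  by rewrite ler_wpM2l // /C0; lra.
nra.
Qed.
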